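(* For $p\in\mathbb{R}\setminus\{0\}$ let $A_p:\mathcal{P}^1_2\to\mathbb{R}^2$ be $A_p(\rho)=p\rho^{1/p}$ (componentwise), and let $A_\infty(\rho)=\log\rho$ (componentwise). For $p\in(1,+\infty]$ let $c_p(\rho)$ denote the curvature of the plane curve $A_p(\mathcal{P}^1_2)\subset\mathbb{R}^2$ at the point $A_p(\rho)$, i.e. for a regular parametrization $t\mapsto(x(t),y(t))$ of the curve, $c_p=\frac{|x'y''-x''y'|}{((x')^2+(y')^2)^{3/2}}$. Then: (i) if $p\in(1,2)$, the function $c_p:\mathcal{P}^1_2\to\mathbb{R}$ is strictly Schur-decreasing; (ii) if $p\in(2,+\infty]$, the function $c_p:\mathcal{P}^1_2\to\mathbb{R}$ is strictly Schur-increasing.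
   Context: $\mathcal{P}^1_2=\{\rho\in\mathbb{R}^2:\rho_1+\rho_2=1,\ \rho_i>0\}$. For $x\in\mathbb{R}^n$, $x^{\downarrow}$ is $x$ with components in decreasing order; $x\succ y$ means $\sum_{i=1}^k x^{\downarrow}_i\le\sum_{i=1}^k y^{\downarrow}_i$ for $k<n$ with equality for $k=n$. A function $f$ is strictly Schur-increasing if $x\succ y$ implies $f(x)\ge f(y)$, with strict inequality whenever $x$ is not a permutation of $y$; strictly Schur-decreasing if $x\succ y$ implies $f(x)\le f(y)$, with strict inequality whenever $x$ is not a permutation of $y$. (The curve $A_p(\mathcal{P}^1_2)$ is the pull-back picture of the $\alpha$-geometry with $p=\frac{2}{1-\alpha}$.) *)

(* Defs.v *)
From Stdlib Require Import Reals.
From Coquelicot Require Import Coquelicot.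
Open Scope R_scope.

Definition P12 (rho : R * R) : Prop :=
  fst rho + snd rho = 1 /\ 0 < fst rho /\ 0 < snd rho.

(* Coordinate map of A_p : componentwise s |-> p s^(1/p) for finite p (p <> 0),
   and s |-> log s for p = +oo.  (The m_infty case is never used.) *)
Definition Acomp (p : Rbar) (s : R) : R :=
  match p with
  | Finite q => q * Rpower s (1 / q)
  | _ => ln s
  end.

Definition A (p : Rbar) (rho : R * R) : R * R :=
  (Acomp p (fst rho), Acomp p (snd rho)).

Definition curve_x (p : Rbar) (t : R) : R := fst (A p (t, 1 - t)).
Definition curve_y (p : Rbar) (t : R) : R := snd (A p (t, 1 - t)).

Definition plane_curvature (x y : R -> R) (t : R) : R :=
  Rabs (Derive x t * Derive (Derive y) t - Derive (Derive x) t * Derive y t)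
  / Rpower ((Derive x t) ^ 2 + (Derive y t) ^ 2) (3 / 2).

Definition c (p : Rbar) (rho : R * R) : R :=
  plane_curvature (curve_x p) (curve_y p) (fst rho).

(* Majorization (paper's convention) for n = 2: x |> y iff
   x^down_1 <= y^down_1 and x_1 + x_2 = y_1 + y_2. *)
Definition majorizes (x y : R * R) : Prop :=
  Rmax (fst x) (snd x) <= Rmax (fst y) (snd y) /\
  fst x + snd x = fst y + snd y.

Definition is_perm2 (x y : R * R) : Prop :=
  x = y \/ x = (snd y, fst y).

Definition strictly_schur_increasing (f : R * R -> R) : Prop :=
  forall x y, P12 x -> P12 y -> majorizes x y ->
    f y <= f x /\ (~ is_perm2 x y -> f y < f x).

Definition strictly_schur_decreasing (f : R * R -> R) : Prop :=
  forall x y, P12 x -> P12 y -> majorizes x y ->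
    f x <= f y /\ (~ is_perm2 x y -> f x < f y).

(* Main.v *)
Require Import Defs.
From Stdlib Require Import Reals Lra.
From Coquelicot Require Import Coquelicot.
Open Scope R_scope.

Definition aof (p : Rbar) : R := match p with Finite q => 1/q - 1 | _ => -1 end.

Lemma dA p u : (forall q, p = Finite q -> q <> 0) -> 0 < u ->
  is_derive (Acomp p) u (exp (aof p * ln u)).
Proof.
  intros Hp Hu. destruct p as [q| |]; simpl.
  - assert (q <> 0) by (apply Hp; reflexivity).
    change (is_derive (fun x => q * exp (1/q * ln x)) u (exp ((1/q-1) * ln u))).
    auto_derive. exact Hu.
    replace ((1/q-1)*ln u) with (1/q*ln u + - ln u) by ring.
    rewrite exp_plus, exp_Ropp, exp_ln by exact Hu. field. split; lra.
  - change (is_derive ln u (exp (-1 * ln u))).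
    auto_derive. exact Hu.
    replace (-1 * ln u) with (- ln u) by ring. rewrite exp_Ropp, exp_ln by exact Hu. field. lra.
  - change (is_derive ln u (exp (-1 * ln u))).
    auto_derive. exact Hu.
    replace (-1 * ln u) with (- ln u) by ring. rewrite exp_Ropp, exp_ln by exact Hu. field. lra.
Qed.

Definition E (a u : R) := exp (a * ln u).

Lemma dE a u : 0 < u -> is_derive (E a) u (a * E a u / u).
Proof. intros Hu. unfold E. auto_derive. exact Hu. field. lra. Qed.

Section S.
Variable p : Rbar.
Hypothesis Hp : forall q, p = Finite q -> q <> 0.

Lemma Dcx t : 0 < t -> Derive (curve_x p) t = E (aof p) t.
Proof. intros Ht. apply is_derive_unique. exact (dA p t Hp Ht). Qed.

Lemma dy t : 0 < t < 1 -> is_derive (curve_y p) t (- E (aof p) (1-t)).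
Proof. intros Ht.
  change (is_derive (fun t => Acomp p (1 - t)) t (- E (aof p) (1-t))).
  eapply is_derive_ext with (f := fun t => Acomp p (1 - t)). reflexivity.
  replace (- E (aof p) (1-t)) with (scal (-1) (E (aof p) (1 - t))).
  2:{ unfold scal; simpl; unfold mult; simpl. ring. }
  apply (is_derive_comp (Acomp p) (fun t => 1 - t) t (E (aof p) (1-t)) (-1)).
  apply dA; auto. lra.
  auto_derive. auto. ring.
Qed.

Lemma Dcy t : 0 < t < 1 -> Derive (curve_y p) t = - E (aof p) (1-t).
Proof. intros Ht. apply is_derive_unique. now apply dy. Qed.

Lemma DDcx t : 0 < t < 1 -> Derive (Derive (curve_x p)) t = aof p * E (aof p) t / t.
Proof. intros Ht.
  rewrite (Derive_ext_loc _ (E (aof p))).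
  apply is_derive_unique. apply dE. lra.
  apply (locally_interval _ t 0 1); simpl; try lra.
  intros y H1 H2. apply Dcx. exact H1.
Qed.

Lemma DDcy t : 0 < t < 1 -> Derive (Derive (curve_y p)) t = aof p * E (aof p) (1-t) / (1-t).
Proof. intros Ht.
  rewrite (Derive_ext_loc _ (fun u => - E (aof p) (1-u))).
  apply is_derive_unique. unfold E. auto_derive. lra. replace (1 + - t) with (1 - t) by ring. field. lra.
  apply (locally_interval _ t 0 1); simpl; try lra.
  intros y H1 H2. apply Dcy. lra.
Qed.
End S.

Definition K (a t : R) := (a-1)*(ln t + ln(1-t)) - 3/2 * ln(exp(2*a*ln t) + exp(2*a*ln(1-t))).

Lemma c_form p t u : (forall q, p = Finite q -> q <> 0) -> aof p < 0 -> 0 < t < 1 ->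
  c p (t, u) = - aof p * exp (K (aof p) t).
Proof.
  intros Hp Ha Ht. unfold c, plane_curvature. change (fst (t,u)) with t.
  rewrite (Dcx p Hp t), (Dcy p Hp t), (DDcx p Hp t), (DDcy p Hp t) by lra.
  set (a := aof p). set (s := 1 - t). assert (Hs : 0 < s) by (unfold s; lra).
  assert (HEt : E a t = exp (a * ln t)) by reflexivity.
  assert (HEs : E a s = exp (a * ln s)) by reflexivity.
  assert (Et2 : E a t ^ 2 = exp (2*a*ln t)).
  { rewrite HEt. replace ((exp (a * ln t))^2) with (exp (a*ln t) * exp (a * ln t)) by ring. rewrite <- exp_plus. f_equal. ring. }
  assert (Es2 : (- E a s) ^ 2 = exp (2*a*ln s)).
  { rewrite HEs. replace ((- exp (a * ln s))^2) with (exp (a*ln s) * exp (a * ln s)) by ring. rewrite <- exp_plus. f_equal. ring. }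
  rewrite Et2, Es2.
  unfold K. fold s.
  replace ((a - 1) * (ln t + ln s) - 3 / 2 * ln (exp (2 * a * ln t) + exp (2 * a * ln s)))
    with ((a * ln t + a * ln s) + (- ln t + - ln s) + - (3 / 2 * ln (exp (2 * a * ln t) + exp (2 * a * ln s)))) by ring.
  rewrite !exp_plus, !exp_Ropp, !exp_ln by lra.
  fold (E a t) (E a s). unfold Rpower.
  set (W := exp (3 / 2 * ln (exp (2 * a * ln t) + exp (2 * a * ln s)))).
  assert (HW : 0 < W) by apply exp_pos.
  assert (Hpos : 0 < E a t * E a s / (t * s)).
  { unfold E. apply Rdiv_lt_0_compat. apply Rmult_lt_0_compat; apply exp_pos. nra. }
  assert (Hc : E a t * (a * E a s / s) - a * E a t / t * - E a s = a * (E a t * E a s / (t * s))).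
  { unfold s in *. field. split; lra. }
  rewrite Hc.
  assert (Ha2 : a < 0) by exact Ha.
  rewrite Rabs_mult, Rabs_left, Rabs_right by lra.
  field. unfold s; repeat split; lra.
Qed.

Definition Kd (a t : R) := (a-1)*(1/t - 1/(1-t)) - 3/2 * (2*a*exp(2*a*ln t)/t - 2*a*exp(2*a*ln(1-t))/(1-t)) / (exp(2*a*ln t)+exp(2*a*ln(1-t))).

Lemma dK a t : 0 < t < 1 -> is_derive (K a) t (Kd a t).
Proof.
  intros Ht. unfold K, Kd. auto_derive.
  - repeat split; try lra. apply Rplus_lt_0_compat; apply exp_pos.
  - replace (1 + - t) with (1 - t) by ring.
    assert (0 < exp (2*a*ln t) + exp (2*a*ln (1-t))) by (apply Rplus_lt_0_compat; apply exp_pos).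
    field. repeat split; lra.
Qed.

Lemma Kd_N a t : 0 < t < 1 ->
  Kd a t * (t * (1-t) * (exp(2*a*ln t)+exp(2*a*ln(1-t)))) =
  (-2*a-1) * (exp(2*a*ln t) * (1-t) - exp(2*a*ln(1-t)) * t)
  + (1-a) * (exp(2*a*ln t) * t - exp(2*a*ln(1-t)) * (1-t)).
Proof.
  intros Ht. unfold Kd.
  assert (0 < exp (2*a*ln t) + exp (2*a*ln (1-t))) by (apply Rplus_lt_0_compat; apply exp_pos).
  field. repeat split; lra.
Qed.

Lemma Kd_half a : Kd a (1/2) = 0.
Proof.
  unfold Kd. replace (1 - 1/2) with (1/2) by field.
  assert (0 < exp (2*a*ln (1/2)) + exp (2*a*ln (1/2))) by (apply Rplus_lt_0_compat; apply exp_pos).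
  field. lra.
Qed.

Lemma ET a t : 0 < t -> exp (2*a*ln t) * t = exp ((2*a+1) * ln t).
Proof. intros Ht. replace ((2*a+1)*ln t) with (2*a*ln t + ln t) by ring.
  rewrite exp_plus, exp_ln; auto. Qed.

Lemma signs a t : a < 0 -> 0 < t < 1/2 ->
  exp(2*a*ln t) * (1-t) - exp(2*a*ln(1-t)) * t > 0 /\
  ((2*a+1 < 0 -> exp(2*a*ln t) * t - exp(2*a*ln(1-t)) * (1-t) > 0) /\
   (2*a+1 > 0 -> exp(2*a*ln t) * t - exp(2*a*ln(1-t)) * (1-t) < 0)).
Proof.
  intros Ha Ht.
  assert (Hl : ln t < ln (1-t)) by (apply ln_increasing; lra).
  assert (HTS : exp (2*a*ln(1-t)) < exp (2*a*ln t)) by (apply exp_increasing; nra).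
  assert (0 < exp (2*a*ln(1-t))) by apply exp_pos.
  split. { nra. }
  rewrite (ET a t), (ET a (1-t)) by lra.
  split; intros Hs.
  - apply Rgt_minus. apply exp_increasing. nra.
  - apply Rlt_minus. apply exp_increasing. nra.
Qed.

Lemma Kd_pos a t : a < -1/2 -> 0 < t < 1/2 -> Kd a t > 0.
Proof.
  intros Ha Ht. destruct (signs a t) as [H1 [H2 _]]; try lra.
  specialize (H2 ltac:(lra)).
  pose proof (Kd_N a t ltac:(lra)) as HN.
  assert (0 < exp (2*a*ln t) + exp (2*a*ln (1-t))) by (apply Rplus_lt_0_compat; apply exp_pos).
  assert (0 < t * (1-t) * (exp(2*a*ln t)+exp(2*a*ln(1-t)))).
  { apply Rmult_lt_0_compat; try lra. apply Rmult_lt_0_compat; lra. }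
  set (D := t * (1-t) * (exp(2*a*ln t)+exp(2*a*ln(1-t)))) in *.
  assert (Kd a t * D > 0) by (rewrite HN; nra).
  nra.
Qed.

Lemma Kd_neg a t : -1/2 < a < 0 -> 0 < t < 1/2 -> Kd a t < 0.
Proof.
  intros Ha Ht. destruct (signs a t) as [H1 [_ H2]]; try lra.
  specialize (H2 ltac:(lra)).
  pose proof (Kd_N a t ltac:(lra)) as HN.
  assert (0 < exp (2*a*ln t) + exp (2*a*ln (1-t))) by (apply Rplus_lt_0_compat; apply exp_pos).
  assert (0 < t * (1-t) * (exp(2*a*ln t)+exp(2*a*ln(1-t)))).
  { apply Rmult_lt_0_compat; try lra. apply Rmult_lt_0_compat; lra. }
  set (D := t * (1-t) * (exp(2*a*ln t)+exp(2*a*ln(1-t)))) in *.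
  assert (Kd a t * D < 0) by (rewrite HN; nra).
  nra.
Qed.

Lemma incr_half (f df : R -> R) : (forall t, 0 < t < 1 -> is_derive f t (df t)) ->
  (forall t, 0 < t < 1/2 -> df t > 0) -> df (1/2) = 0 ->
  forall t1 t2, 0 < t1 < t2 -> t2 <= 1/2 -> f t1 < f t2.
Proof.
  intros Hd Hp H0 t1 t2 H12 H2.
  set (m := (t1 + t2) / 2).
  assert (f t1 < f m).
  { apply (incr_function f 0 (1/2) df); simpl; try (unfold m; lra).
    - intros x Hx1 Hx2. apply Hd. lra.
    - intros x Hx1 Hx2. apply Hp. lra. }
  destruct (MVT_gen f m t2 df) as [c0 [Hc Heq]].
  - rewrite Rmin_left, Rmax_right by (unfold m; lra). intros x Hx. apply Hd. unfold m in Hx; lra.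
  - rewrite Rmin_left, Rmax_right by (unfold m; lra). intros x Hx.
    apply continuity_pt_filterlim. apply (ex_derive_continuous (V := R_NormedModule)). eexists. apply Hd. unfold m in Hx; lra.
  - rewrite Rmin_left, Rmax_right in Hc by (unfold m; lra).
    assert (df c0 >= 0).
    { destruct (Rlt_or_le c0 (1/2)) as [Hl|Hl].
      - left. apply Hp. unfold m in Hc; lra.
      - assert (c0 = 1/2) by lra. subst c0. lra. }
    assert (t2 - m > 0) by (unfold m; lra).
    nra.
Qed.

Lemma K_sym a t : K a (1 - t) = K a t.
Proof. unfold K. replace (1 - (1 - t)) with t by ring.
  rewrite (Rplus_comm (exp (2*a*ln (1-t)))). ring. Qed.

Lemma schur_core (f : R -> R) : (forall t, 0 < t < 1 -> f (1 - t) = f t) ->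
  (forall t1 t2, 0 < t1 < t2 -> t2 <= 1/2 -> f t1 < f t2) ->
  forall x y, P12 x -> P12 y -> majorizes x y ->
  f (fst y) <= f (fst x) /\ (~ is_perm2 x y -> f (fst y) < f (fst x)).
Proof.
  intros Hs Hm [x1 x2] [y1 y2] [Hx1 [Hx2 Hx3]] [Hy1 [Hy2 Hy3]] [Hmj _]; simpl in *.
  assert (x2 = 1 - x1) by lra. assert (y2 = 1 - y1) by lra. subst x2 y2.
  assert (Fx : f x1 = f (Rmin x1 (1 - x1))).
  { unfold Rmin; destruct (Rle_dec x1 (1 - x1)) as [_|_]; [reflexivity|]. rewrite Hs by lra. reflexivity. }
  assert (Fy : f y1 = f (Rmin y1 (1 - y1))).
  { unfold Rmin; destruct (Rle_dec y1 (1 - y1)) as [_|_]; [reflexivity|]. rewrite Hs by lra. reflexivity. }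
  assert (Bx : 0 < Rmin x1 (1 - x1) <= 1/2) by (unfold Rmin; destruct (Rle_dec x1 (1 - x1)); lra).
  assert (By : 0 < Rmin y1 (1 - y1) <= 1/2) by (unfold Rmin; destruct (Rle_dec y1 (1 - y1)); lra).
  assert (Le : Rmin y1 (1 - y1) <= Rmin x1 (1 - x1)).
  { unfold Rmax in Hmj; unfold Rmin; destruct (Rle_dec x1 (1 - x1)); destruct (Rle_dec y1 (1 - y1)); lra. }
  assert (Eq : Rmin y1 (1 - y1) = Rmin x1 (1 - x1) -> x1 = y1 \/ x1 = 1 - y1).
  { unfold Rmin; destruct (Rle_dec x1 (1 - x1)); destruct (Rle_dec y1 (1 - y1)); intros; lra. }
  rewrite Fx, Fy.
  destruct (Req_dec (Rmin y1 (1 - y1)) (Rmin x1 (1 - x1))) as [He|He].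
  - split. rewrite He; lra.
    intros Hn. exfalso. apply Hn. destruct (Eq He) as [E1|E1].
    + left. subst. reflexivity.
    + right. simpl. f_equal; lra.
  - assert (f (Rmin y1 (1 - y1)) < f (Rmin x1 (1 - x1))) by (apply Hm; lra).
    split; [lra | intros; lra].
Qed.

Lemma c_sym p t : (forall q, p = Finite q -> q <> 0) -> aof p < 0 -> 0 < t < 1 ->
  c p (1 - t, 0) = c p (t, 0).
Proof. intros Hp Ha Ht. rewrite !c_form by (auto; lra). rewrite K_sym. reflexivity. Qed.

Theorem mainTheorem3 :
  (forall p : R, 1 < p < 2 -> strictly_schur_decreasing (c (Finite p))) /\
  (forall p : Rbar, Rbar_lt 2 p -> strictly_schur_increasing (c p)).
Proof.
  split.
  - intros p Hp x y Hx Hy Hm.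
    assert (Hq : forall q, Finite p = Finite q -> q <> 0) by (intros q Hq; injection Hq; lra).
    assert (Hinv : 1/p * p = 1) by (field; lra).
    assert (Ha : -1/2 < aof (Finite p) < 0) by (simpl; nra).
    destruct (schur_core (fun t => - c (Finite p) (t, 0))) with (x := x) (y := y) as [H1 H2]; auto.
    + intros t Ht. simpl. rewrite c_sym; auto; lra.
    + intros t1 t2 H12 H2.
      rewrite !c_form by (auto; lra).
      assert (K (aof (Finite p)) t2 < K (aof (Finite p)) t1).
      { assert (- K (aof (Finite p)) t1 < - K (aof (Finite p)) t2); [|lra].
        apply (incr_half (fun t => - K (aof (Finite p)) t) (fun t => - Kd (aof (Finite p)) t)); auto.
        - intros t Ht. apply (is_derive_opp (K (aof (Finite p)))). apply dK. exact Ht.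
        - intros t Ht. pose proof (Kd_neg (aof (Finite p)) t Ha Ht). lra.
        - rewrite Kd_half. ring. }
      assert (exp (K (aof (Finite p)) t2) < exp (K (aof (Finite p)) t1)) by (apply exp_increasing; auto).
      nra.
    + change (c (Finite p) x) with (c (Finite p) (fst x, 0)).
      change (c (Finite p) y) with (c (Finite p) (fst y, 0)).
      split; [lra | intros Hn; specialize (H2 Hn); lra].
  - intros p Hp x y Hx Hy Hm.
    assert (Hq : forall q, p = Finite q -> q <> 0).
    { intros q Hq. subst p. simpl in Hp. lra. }
    assert (Ha : aof p < -1/2 /\ aof p < 0).
    { destruct p as [q| |]; simpl in *; try lra.
      assert (Hinv : 1/q * q = 1) by (field; lra). nra. }
    destruct (schur_core (fun t => c p (t, 0))) with (x := x) (y := y) as [H1 H2]; auto.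
    + intros t Ht. simpl. rewrite c_sym; auto; lra.
    + intros t1 t2 H12 H2.
      rewrite !c_form by (auto; lra).
      assert (K (aof p) t1 < K (aof p) t2).
      { apply (incr_half (K (aof p)) (Kd (aof p))); auto.
        - intros t Ht. apply dK. exact Ht.
        - intros t Ht. apply (Kd_pos (aof p) t); lra.
        - apply Kd_half. }
      assert (exp (K (aof p) t1) < exp (K (aof p) t2)) by (apply exp_increasing; auto).
      nra.
Qed.
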